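(* The Hausdorff completion of a co-Heyting algebra $L$ (with respect to its codimetric pseudometric) is compact if and only if $L/dL$ is finite for every positive integer $d$.
   Context: A co-Heyting algebra is a bounded distributive lattice $(L,0,1,\vee,\wedge)$ such that $a-b=\min\{c\in L: a\le b\vee c\}$ exists for all $a,b$. Let $a\triangle b=(a-b)\vee(b-a)$; for an ideal $I$, $L/I$ is the quotient by $a\equiv_I b\iff a\triangle b\in I$. $\operatorname{Spec}L$ is the set of prime filters ordered by inclusion; height = foundation rank there; $\operatorname{codim}_La=\min\{\operatorname{height}\mathfrak p: a\in\mathfrak p\}$ ($+\infty$ if none); $dL=\{a:\operatorname{codim}_La\ge d\}$ is an ideal. The codimetric pseudometric is $\operatorname{dist}_L(a,b)=2^{-\operatorname{codim}_L(a\triangle b)}$ if finite, $0$ otherwise. The Hausdorff completion of a pseudometric space is the completion of its largest Hausdorff (metric) quotient. *)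

(* Defs.v *)
From Stdlib Require Import Reals List ClassicalEpsilon.
Open Scope R_scope.

(** Co-Heyting algebra: a bounded distributive lattice (given algebraically)
    together with an operation [cdiff] such that
    [cdiff a b] = min { c | a <= b \/ c }, expressed by the Galois condition
    a <= b \/ c  <->  cdiff a b <= c. Order: x <= y iff x \/ y = y. *)
Record coHeyting := CoHeyting {
  car :> Type;
  bot : car;
  top : car;
  join : car -> car -> car;
  meet : car -> car -> car;
  cdiff : car -> car -> car;
  join_assoc : forall a b c, join a (join b c) = join (join a b) c;
  meet_assoc : forall a b c, meet a (meet b c) = meet (meet a b) c;
  join_comm : forall a b, join a b = join b a;
  meet_comm : forall a b, meet a b = meet b a;
  join_meet_absorb : forall a b, join a (meet a b) = a;
  meet_join_absorb : forall a b, meet a (join a b) = a;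
  meet_join_distr : forall a b c, meet a (join b c) = join (meet a b) (meet a c);
  bot_join : forall a, join bot a = a;
  top_meet : forall a, meet top a = a;
  cdiff_spec : forall a b c,
    join a (join b c) = join b c <-> join (cdiff a b) c = c
}.

Arguments bot {c} : rename.
Arguments top {c} : rename.
Arguments join {c} : rename.
Arguments meet {c} : rename.
Arguments cdiff {c} : rename.

Section CoHeytingDefs.
Variable L : coHeyting.

Definition cle (x y : L) : Prop := join x y = y.

Definition symdiff (a b : L) : L := join (cdiff a b) (cdiff b a).

Definition prime_filter (p : L -> Prop) : Prop :=
  p top /\ ~ p bot /\
  (forall a b, p a -> cle a b -> p b) /\
  (forall a b, p a -> p b -> p (meet a b)) /\
  (forall a b, p (join a b) -> p a \/ p b).

Definition strict_incl (q p : L -> Prop) : Prop :=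
  (forall x, q x -> p x) /\ exists x, p x /\ ~ q x.

(** [height_ge p n] : the foundation rank (height) of [p] in Spec L
    (ordered by inclusion) is at least the natural number [n]. *)
Fixpoint height_ge (p : L -> Prop) (n : nat) : Prop :=
  match n with
  | O => True
  | S m => exists q, prime_filter q /\ strict_incl q p /\ height_ge q m
  end.

(** codim_L a >= d  (min over prime filters containing a; +oo if none) *)
Definition codim_ge (a : L) (d : nat) : Prop :=
  forall p, prime_filter p -> p a -> height_ge p d.

Definition dideal (d : nat) (a : L) : Prop := codim_ge a d.

(** 2^{-codim a} if codim a is finite, 0 otherwise *)
Definition codist (a : L) : R :=
  match excluded_middle_informative
          (exists n, codim_ge a n /\ ~ codim_ge a (S n)) with
  | left H => (/ 2) ^ (proj1_sig (constructive_indefinite_description _ H))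
  | right _ => 0
  end.

Definition cdist (a b : L) : R := codist (symdiff a b).

(** L / dL is finite: finitely many classes of a ≡ b iff a △ b ∈ dL *)
Definition quotient_finite (d : nat) : Prop :=
  exists s : list L, forall a, exists b, In b s /\ dideal d (symdiff a b).

End CoHeytingDefs.

Definition is_metric {Y : Type} (dY : Y -> Y -> R) : Prop :=
  (forall x y, dY x y = 0 <-> x = y) /\
  (forall x y, dY x y = dY y x) /\
  (forall x y z, dY x z <= dY x y + dY y z).

Definition cauchy_seq {Y : Type} (dY : Y -> Y -> R) (u : nat -> Y) : Prop :=
  forall e, 0 < e -> exists N, forall m n, (N <= m)%nat -> (N <= n)%nat ->
    dY (u m) (u n) < e.

Definition converges_to {Y : Type} (dY : Y -> Y -> R) (u : nat -> Y) (y : Y) : Prop :=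
  forall e, 0 < e -> exists N, forall n, (N <= n)%nat -> dY (u n) y < e.

Definition metric_complete {Y : Type} (dY : Y -> Y -> R) : Prop :=
  forall u, cauchy_seq dY u -> exists y, converges_to dY u y.

Definition metric_open {Y : Type} (dY : Y -> Y -> R) (U : Y -> Prop) : Prop :=
  forall y, U y -> exists e, 0 < e /\ forall z, dY y z < e -> U z.

Definition metric_compact {Y : Type} (dY : Y -> Y -> R) : Prop :=
  forall (I : Type) (U : I -> Y -> Prop),
    (forall i, metric_open dY (U i)) ->
    (forall y, exists i, U i y) ->
    exists s : list I, forall y, exists i, In i s /\ U i y.

(** (Y, dY) together with f : L -> Y is a Hausdorff completion of the
    pseudometric space (L, cdist): Y is a complete metric space and f is a
    distance-preserving map with dense image (this characterizes the
    completion of the metric quotient of L up to isometry). *)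
Definition is_hausdorff_completion (L : coHeyting) (Y : Type)
    (dY : Y -> Y -> R) (f : L -> Y) : Prop :=
  is_metric dY /\ metric_complete dY /\
  (forall a b, dY (f a) (f b) = cdist L a b) /\
  (forall y e, 0 < e -> exists a, dY y (f a) < e).

(* Main.v *)
Require Import Defs.
From Stdlib Require Import Reals List Lra Lia Classical ClassicalEpsilon.
Open Scope R_scope.

Lemma half_pow_le (m n : nat) : (m <= n)%nat -> (/2)^n <= (/2)^m.
Proof.
  intros H. rewrite !pow_inv. apply Rinv_le_contravar.
  - apply pow_lt; lra.
  - apply Rle_pow; lra || exact H.
Qed.

Lemma half_pow_pos (n : nat) : 0 < (/2)^n.
Proof. apply pow_lt; lra. Qed.

Lemma half_pow_small (e : R) : 0 < e -> exists k, (/2)^k < e.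
Proof.
  intros He. destruct (pow_lt_1_zero (/2)) with (y := e) as [N HN].
  - rewrite Rabs_right; lra.
  - exact He.
  - exists N. specialize (HN N (le_n N)). rewrite Rabs_right in HN; auto.
    left; apply half_pow_pos.
Qed.

Section Codim.
Variable L : coHeyting.

Lemma height_ge_S (p : L -> Prop) n : height_ge L p (S n) -> height_ge L p n.
Proof.
  revert p; induction n as [|n IH]; intros p H; simpl; auto.
  destruct H as [q [Hq [Hs Hh]]]. exists q. split; [exact Hq|split; [exact Hs|apply IH; exact Hh]].
Qed.

Lemma codim_mono (x : L) m n : (m <= n)%nat -> codim_ge L x n -> codim_ge L x m.
Proof.
  induction 1; auto. intros Hc. apply IHle. intros p Hp Hx.
  apply height_ge_S. apply Hc; auto.
Qed.

Lemma codim_all (x : L) :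
  ~ (exists n, codim_ge L x n /\ ~ codim_ge L x (S n)) -> forall n, codim_ge L x n.
Proof.
  intros H n; induction n.
  - intros p _ _; simpl; auto.
  - apply NNPP; intro Hn; apply H; eauto.
Qed.

Lemma codist_lt (x : L) d : codist L x < (/2)^d -> codim_ge L x d.
Proof.
  unfold codist. destruct excluded_middle_informative as [H|H].
  - destruct (constructive_indefinite_description _ H) as [n [Hn Hn']]; simpl.
    intros Hlt. destruct (Compare_dec.le_lt_dec n d) as [Hle|Hlt'].
    + exfalso. pose proof (half_pow_le _ _ Hle). lra.
    + apply (codim_mono x d n); [lia|auto].
  - intros _. apply codim_all; auto.
Qed.

Lemma codist_le (x : L) d : codim_ge L x d -> codist L x <= (/2)^d.
Proof.
  intros Hd. unfold codist. destruct excluded_middle_informative as [H|H].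
  - destruct (constructive_indefinite_description _ H) as [n [Hn Hn']]; simpl.
    destruct (Compare_dec.le_lt_dec d n) as [Hle|Hlt'].
    + apply half_pow_le; auto.
    + exfalso; apply Hn'. apply (codim_mono x (S n) d); [lia|auto].
  - left; apply half_pow_pos.
Qed.
End Codim.

Section Compact.
Variables (Y : Type) (dY : Y -> Y -> R) (y0 : Y).
Hypothesis Hm : is_metric dY.
Hypothesis Hc : metric_complete dY.
Hypothesis Htb : forall r, 0 < r -> exists cs : list Y,
  forall y, exists c, In c cs /\ dY y c < r.

Lemma dsym x y : dY x y = dY y x. Proof. apply Hm. Qed.
Lemma dtri x y z : dY x z <= dY x y + dY y z. Proof. apply Hm. Qed.

Variables (I : Type) (U : I -> Y -> Prop).
Hypothesis Hopen : forall i, metric_open dY (U i).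
Hypothesis Hcov : forall y, exists i, U i y.

Definition covered (A : Y -> Prop) :=
  exists s : list I, forall y, A y -> exists i, In i s /\ U i y.

Lemma split_bad (A : Y -> Prop) r (cs : list Y) :
  (forall y, exists c, In c cs /\ dY y c < r) ->
  ~ covered A -> exists c, ~ covered (fun y => A y /\ dY y c < r).
Proof.
  intros Hcs Hbad. apply NNPP; intro Hno.
  assert (Hall : forall c, covered (fun y => A y /\ dY y c < r)).
  { intro c. apply NNPP; intro Hn; apply Hno; eauto. }
  assert (Hl : forall l : list Y, covered (fun y => A y /\ exists c, In c l /\ dY y c < r)).
  { induction l as [|c l IH].
    - exists nil. intros y [_ [c [[] _]]].
    - destruct IH as [s1 Hs1]. destruct (Hall c) as [s2 Hs2].
      exists (s1 ++ s2). intros y [Ay [c' [[<-|Hin] Hd]]].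
      + destruct (Hs2 y (conj Ay Hd)) as [i [Hi Ui]].
        exists i; split; auto; apply in_or_app; auto.
      + destruct (Hs1 y (conj Ay (ex_intro _ c' (conj Hin Hd)))) as [i [Hi Ui]].
        exists i; split; auto; apply in_or_app; auto. }
  apply Hbad. destruct (Hl cs) as [s Hs]. exists s. intros y Ay.
  apply Hs. split; auto.
Qed.

Definition rk (k : nat) := (/2)^k.

Lemma step_ex (A : Y -> Prop) k :
  exists c, ~ covered A -> ~ covered (fun y => A y /\ dY y c < rk k).
Proof.
  destruct (Htb (rk k) (half_pow_pos k)) as [cs Hcs].
  destruct (classic (covered A)) as [H|H].
  - exists y0; tauto.
  - destruct (split_bad A (rk k) cs Hcs H) as [c Hc']. exists c; auto.
Qed.

Definition step A k := proj1_sig (constructive_indefinite_description _ (step_ex A k)).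

Lemma step_spec A k : ~ covered A -> ~ covered (fun y => A y /\ dY y (step A k) < rk k).
Proof. unfold step. destruct constructive_indefinite_description; auto. Qed.

Fixpoint Aseq (k : nat) : Y -> Prop :=
  match k with
  | O => fun _ => True
  | S k => fun y => Aseq k y /\ dY y (step (Aseq k) k) < rk k
  end.

Definition cen k := step (Aseq k) k.

Lemma Aseq_bad (Hnc : ~ covered (fun _ => True)) k : ~ covered (Aseq k).
Proof. induction k; simpl; auto. apply step_spec; auto. Qed.

Lemma Aseq_mono k m : (k <= m)%nat -> forall y, Aseq m y -> Aseq k y.
Proof. induction 1; auto. intros y [Hy _]; auto. Qed.

Lemma Aseq_cen k m y : (S k <= m)%nat -> Aseq m y -> dY y (cen k) < rk k.
Proof. intros H Hy. apply (Aseq_mono _ _ H) in Hy. apply Hy. Qed.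

Lemma compact_of : metric_compact dY.
Proof. Abort.

Lemma cover_finite : exists s : list I, forall y, exists i, In i s /\ U i y.
Proof.
  apply NNPP; intro Hn.
  assert (Hnc : ~ covered (fun _ => True)).
  { intros [s Hs]; apply Hn; exists s; intros y; apply Hs; auto. }
  set (x := fun k => epsilon (inhabits y0) (Aseq k)).
  assert (Hx : forall k, Aseq k (x k)).
  { intro k. unfold x. apply epsilon_spec. apply NNPP; intro Hne.
    apply (Aseq_bad Hnc k). exists nil. intros y Hy; exfalso; eauto. }
  assert (Hcau : cauchy_seq dY x).
  { intros e He. destruct (half_pow_small (e/2)) as [k Hk]; [lra|].
    exists (S k). intros m n Hm' Hn'.
    pose proof (Aseq_cen k m (x m) Hm' (Hx m)).
    pose proof (Aseq_cen k n (x n) Hn' (Hx n)).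
    pose proof (dtri (x m) (cen k) (x n)). rewrite (dsym (cen k) (x n)) in H1.
    unfold rk in *. lra. }
  destruct (Hc x Hcau) as [y Hy].
  destruct (Hcov y) as [i Ui]. destruct (Hopen i y Ui) as [e [He Hball]].
  destruct (half_pow_small (e/3)) as [k Hk]; [lra|].
  destruct (Hy (rk k) (half_pow_pos k)) as [N HN].
  set (n := max N (S k)).
  assert (H1 : dY (x n) y < rk k) by (apply HN; lia).
  assert (H2 : dY (x n) (cen k) < rk k) by (apply (Aseq_cen k n); [lia|apply Hx]).
  apply (Aseq_bad Hnc (S k)). exists (i :: nil). intros z Hz.
  exists i; split; [left; auto|]. apply Hball.
  assert (H3 : dY z (cen k) < rk k) by (apply (Aseq_cen k (S k)); auto).
  pose proof (dtri y (x n) (cen k)). pose proof (dtri y (cen k) z).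
  rewrite (dsym y (x n)) in H. rewrite (dsym (cen k) z) in H0.
  unfold rk in *. lra.
Qed.
End Compact.

Theorem corollary7p5 (L : coHeyting) (Y : Type) (dY : Y -> Y -> R) (f : L -> Y) :
  is_hausdorff_completion L Y dY f ->
  (metric_compact dY <-> forall d : nat, (0 < d)%nat -> quotient_finite L d).
Proof.
  intros [Hm [Hc [Hiso Hdense]]].
  assert (dsym' : forall x y, dY x y = dY y x) by apply Hm.
  assert (dtri' : forall x y z, dY x z <= dY x y + dY y z) by apply Hm.
  split.
  - intros Hcomp d _.
    set (U := fun (b : L) (y : Y) => dY y (f b) < (/2)^d).
    destruct (Hcomp L U) as [s Hs].
    + intros b y Hy. exists ((/2)^d - dY y (f b)). split; [unfold U in Hy; lra|].
      intros z Hz. unfold U in *. pose proof (dtri' z y (f b)).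
      rewrite (dsym' z y) in H. lra.
    + intros y. destruct (Hdense y ((/2)^d) (half_pow_pos d)) as [a Ha].
      exists a; exact Ha.
    + exists s. intros a. destruct (Hs (f a)) as [b [Hb Ub]].
      exists b; split; auto. unfold dideal. apply codist_lt.
      unfold U in Ub. rewrite Hiso in Ub. exact Ub.
  - intros Hq. intros I U Hopen Hcov.
    set (y0 := f bot).
    apply (cover_finite Y dY y0 Hm Hc); auto.
    intros r Hr. destruct (half_pow_small (r/2)) as [d Hd]; [lra|].
    destruct (Hq (S d) (Nat.lt_0_succ d)) as [s Hs].
    exists (map f s). intros y.
    destruct (Hdense y (r/2)) as [a Ha]; [lra|].
    destruct (Hs a) as [b [Hb Hab]].
    exists (f b). split; [apply in_map; auto|].
    pose proof (codist_le L _ _ Hab).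
    pose proof (half_pow_le d (S d) (le_S _ _ (le_n d))).
    pose proof (dtri' y (f a) (f b)). rewrite Hiso in H1. unfold cdist in H1.
    lra.
Qed.
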